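(* Let $R$ be a finite local commutative ring, $K\le R^\times$, $\mathcal C=\mathrm{Cyc}(K,R)$ and $\mathcal A=\mathcal A(K,R)$ its multiplication S-ring; let $u=0$, $v=1$. If the S-ring $\mathcal A$ is trivial, then the scheme $\mathcal C_{u,v}$ is trivial. In particular, in this case $\mathrm{Aut}(\mathcal C)=\Gamma(K,R)$.
   Context: All rings have an identity. A scheme on a finite set $V$ is a pair $(V,\mathcal R)$, $\mathcal R$ a partition of $V\times V$ into nonempty basis relations, closed under transposition, with the diagonal a union of basis relations and with the intersection numbers $|\{y:(x,y)\in R_1,(y,z)\in R_2\}|$ depending only on the basis relation containing $(x,z)$; relations are unions of basis relations. A scheme is trivial if every subset of $V\times V$ is a relation (all basis relations are singletons). $\mathrm{Aut}$ is the group of permutations fixing every basis relation; $\mathrm{Iso}$ the group of permutations permuting them. $[\mathcal C,\mathcal M]$ is the smallest scheme having all relations of $\mathcal C$ and of the set $\mathcal M$ as relations; $\mathcal C_w=[\mathcal C,\{(w,w)\}]$, $\mathcal C_{u,v}=[\mathcal C,\{(u,u)\},\{(v,v)\}]$. If $\Delta(U)$ is a relation, $\mathcal C_U$ is the scheme on $U$ with basis relations the nonempty $S\cap U^2$. For $\Gamma\le\mathrm{Iso}(\mathcal C)$, $\mathcal C^\Gamma$ is the scheme whose relations are the $\Gamma$-invariant relations of $\mathcal C$. $\mathrm{Cyc}(K,R)$ is the scheme on $R$ with basis relations $\{(x,y): y-x\in rK\}$, $r\in R$. With $u=0$, $\mathcal C'=((\mathcal C_u)_{R^\times})^{R^\times_{right}}$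 where $R^\times_{right}=\{x\mapsto xa:a\in R^\times\}$; its basis relations are $\{(g,xg):g\in R^\times,x\in X\}$ for sets $X$ partitioning $R^\times$. The multiplication S-ring $\mathcal A(K,R)$ is the S-ring over $R^\times$ with these basic sets $X$; it is trivial if all basic sets are singletons. $\Gamma(K,R)$ is the group of permutations $x\mapsto ax+b$, $a\in K$, $b\in R$. *)

(* Defs.v *)
From mathcomp Require Import all_boot all_order all_algebra all_fingroup.
Set Implicit Arguments. Unset Strict Implicit. Unset Printing Implicit Defensive.
Import GRing.Theory.
Local Open Scope ring_scope.

Section Schemes.
Variable V : finType.

Definition transp (s : {set V * V}) : {set V * V} := [set p | (p.2, p.1) \in s].
Definition diagV : {set V * V} := [set p | p.1 == p.2].

Definition is_rel (S : {set {set V * V}}) (T : {set V * V}) : Prop :=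
  exists2 Q : {set {set V * V}}, Q \subset S & T = cover Q.

Definition is_scheme (S : {set {set V * V}}) : Prop :=
  [/\ partition S [set: V * V],
      forall s, s \in S -> transp s \in S,
      is_rel S diagV &
      forall r1 r2 s, r1 \in S -> r2 \in S -> s \in S ->
        forall x z x' z', (x, z) \in s -> (x', z') \in s ->
          #|[set y | ((x, y) \in r1) && ((y, z) \in r2)]| =
          #|[set y | ((x', y) \in r1) && ((y, z') \in r2)]| ].

(* relations of [C, M]: the smallest scheme whose relations contain those of the
   scheme C (basis Cb) and the sets in M. *)
Definition gen_rel (Cb : {set {set V * V}}) (M : {set {set V * V}}) (T : {set V * V}) : Prop :=
  forall S, is_scheme S ->
    (forall T', is_rel Cb T' -> is_rel S T') ->
    (forall T', T' \in M -> is_rel S T') ->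
    is_rel S T.

Definition gen_trivial (Cb : {set {set V * V}}) (M : {set {set V * V}}) : Prop :=
  forall T : {set V * V}, gen_rel Cb M T.

Definition basis_of (isR : {set V * V} -> Prop) (B : {set V * V}) : Prop :=
  [/\ isR B, B != set0 &
      forall T, isR T -> T \subset B -> T = set0 \/ T = B].

Definition in_Aut (Cb : {set {set V * V}}) (g : {perm V}) : Prop :=
  forall B, B \in Cb -> [set (g p.1, g p.2) | p in B] = B.

End Schemes.

Section Local.
Variable R : finComUnitRingType.

Definition is_ideal (I : {set R}) : Prop :=
  [/\ (0 : R) \in I,
      forall x y, x \in I -> y \in I -> x + y \in I,
      forall x, x \in I -> - x \in I &
      forall r x, x \in I -> r * x \in I].

Definition is_maximal_ideal (I : {set R}) : Prop :=
  [/\ is_ideal I, (1 : R) \notin I &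
      forall J, is_ideal J -> (1 : R) \notin J -> I \subset J -> J = I].

Definition local_ring : Prop :=
  exists I, is_maximal_ideal I /\ forall J, is_maximal_ideal J -> J = I.

Variable K : {group {unit R}}.

Definition unitsR : {set R} := [set x : R | x \is a GRing.unit].

Definition rK (r : R) : {set R} := [set r * val k | k in K].

Definition cyc_rel (r : R) : {set R * R} := [set p | p.2 - p.1 \in rK r].
Definition Cyc_basis : {set {set R * R}} := [set cyc_rel r | r : R].

Definition Cu_rel : {set R * R} -> Prop :=
  gen_rel Cyc_basis [set [set ((0 : R), (0 : R))]].

Definition CuU_basis (B : {set R * R}) : Prop :=
  exists2 S, basis_of Cu_rel S & B = S :&: setX unitsR unitsR /\ B != set0.

Definition CuU_rel (T : {set R * R}) : Prop :=
  exists2 Q : {set {set R * R}}, (forall B, B \in Q -> CuU_basis B) & T = cover Q.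

(* C' = ((C_u)_{R^x})^{R^x_right}: the R^x_right-invariant relations *)
Definition Cprime_rel (T : {set R * R}) : Prop :=
  CuU_rel T /\
  forall a, a \in unitsR -> [set (p.1 * a, p.2 * a) | p in T] = T.

(* A(K,R) trivial: every basic set X is a singleton, i.e. every basis relation
   {(g, x g) : g in R^x, x in X} of C' has X = {x} *)
Definition mult_sring_trivial : Prop :=
  forall B, basis_of Cprime_rel B ->
    exists2 x, x \in unitsR & B = [set (g, x * g) | g in unitsR].

Definition in_Gamma (g : {perm R}) : Prop :=
  exists2 a : {unit R}, a \in K & exists b : R, forall x, g x = val a * x + b.

End Local.

(* Main.v *)
Require Import Defs.
From mathcomp Require Import all_boot all_order all_algebra all_fingroup.
From mathcomp Require Import ring.
From Stdlib Require Import Classical ClassicalEpsilon.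
Set Implicit Arguments. Unset Strict Implicit. Unset Printing Implicit Defensive.
Import GRing.Theory.
Section Gen.
Variable V : finType.
Implicit Types (S : {set {set V * V}}) (T : {set V * V}).

Definition sclosed S T := forall s, s \in S -> forall p q, p \in s -> q \in s -> p \in T -> q \in T.

Lemma rel_closed S T : partition S [set: V * V] -> is_rel S T <-> sclosed S T.
Proof.
move=> /and3P[/eqP cov triv n0]; split.
  move=> [Q QS ->] s sS p q ps qs /bigcupP[s' s'Q ps'].
  have s'S := subsetP QS _ s'Q.
  have e : s = s' by rewrite -(def_pblock triv sS ps) (def_pblock triv s'S ps').
  by apply/bigcupP; exists s'; rewrite // -e.
move=> cl; exists [set s in S | s \subset T].
  by apply/subsetP=> s; rewrite inE => /andP[].
apply/setP=> p; apply/idP/idP.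
  move=> pT.
  have hs : pblock S p \in S by rewrite pblock_mem ?cov ?inE.
  have hp : p \in pblock S p by rewrite mem_pblock cov inE.
  apply/bigcupP; exists (pblock S p) => //.
  rewrite inE hs /=; apply/subsetP=> q qs; exact: (cl _ hs p q hp qs pT).
by move=> /bigcupP[s]; rewrite inE => /andP[_ /subsetP]; apply.
Qed.

Definition rcomp T1 T2 : {set V * V} :=
  [set p | [exists y, ((p.1, y) \in T1) && ((y, p.2) \in T2)]].

Section Sch.
Variable S : {set {set V * V}}.
Hypothesis hS : is_scheme S.

Let hP : partition S [set: V * V]. Proof. by case: hS. Qed.

Lemma relP T : is_rel S T <-> sclosed S T.
Proof. exact: rel_closed. Qed.

Lemma blockE p : pblock S p \in S /\ p \in pblock S p.
Proof.
case/and3P: hP => /eqP cov _ _.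
by rewrite pblock_mem ?mem_pblock cov ?inE.
Qed.

Lemma same_block s p : s \in S -> p \in s -> s = pblock S p.
Proof. by case/and3P: hP => _ triv _ sS ps; rewrite (def_pblock triv sS ps). Qed.

Lemma rel_comp T1 T2 : is_rel S T1 -> is_rel S T2 -> is_rel S (rcomp T1 T2).
Proof.
move=> /relP c1 /relP c2; apply/relP=> s sS p q ps qs.
rewrite !inE => /existsP[y /andP[h1 h2]].
case: hS => _ _ _ hI.
have [b1S b1] := blockE (p.1, y).
have [b2S b2] := blockE (y, p.2).
set A1 := pblock S (p.1, y) in b1S b1; set A2 := pblock S (y, p.2) in b2S b2.
have := hI A1 A2 s b1S b2S sS p.1 p.2 q.1 q.2.
rewrite -!surjective_pairing => /(_ ps qs) e.
have : 0 < #|[set y0 | ((p.1, y0) \in A1) && ((y0, p.2) \in A2)]|.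
  by apply/card_gt0P; exists y; rewrite inE b1 b2.
rewrite e => /card_gt0P[y' ]; rewrite inE => /andP[h1' h2'].
apply/existsP; exists y'; apply/andP; split.
  exact: (c1 _ b1S _ _ b1 h1' h1).
exact: (c2 _ b2S _ _ b2 h2' h2).
Qed.

Lemma rel_transp T : is_rel S T -> is_rel S (transp T).
Proof.
move=> /relP c; apply/relP=> s sS p q ps qs; rewrite !inE => pT.
case: hS => _ htr _ _.
have tS := htr _ sS.
apply: (c _ tS (p.2, p.1) (q.2, q.1)); by rewrite ?inE /= -?surjective_pairing.
Qed.

Lemma rel_cover (Q : {set {set V * V}}) :
  (forall t, t \in Q -> is_rel S t) -> is_rel S (cover Q).
Proof.
move=> h; apply/relP=> s sS p q ps qs /bigcupP[t tQ pt].
apply/bigcupP; exists t => //; have /relP ht := h t tQ; exact: (ht s sS p q ps qs pt).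
Qed.

Lemma rel_setD T1 T2 : is_rel S T1 -> is_rel S T2 -> is_rel S (T1 :\: T2).
Proof.
move=> /relP c1 /relP c2; apply/relP=> s sS p q ps qs; rewrite !inE => /andP[n2 p1].
rewrite (c1 _ sS _ _ ps qs p1) andbT; apply/negP=> q2; move/negP: n2; apply.
exact: (c2 _ sS _ _ qs ps q2).
Qed.

Lemma rel_setI T1 T2 : is_rel S T1 -> is_rel S T2 -> is_rel S (T1 :&: T2).
Proof.
move=> /relP c1 /relP c2; apply/relP=> s sS p q ps qs; rewrite !inE => /andP[a b].
by rewrite (c1 _ sS _ _ ps qs a) (c2 _ sS _ _ ps qs b).
Qed.

Lemma rel_setT : is_rel S [set: V * V].
Proof. by apply/relP=> s sS p q _ _ _; rewrite inE. Qed.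

Lemma rel_single a c P : is_rel S [set (a, a)] -> is_rel S P ->
  (forall b, ((a, b) \in P) = (b == c)) -> is_rel S [set (c, c)].
Proof.
move=> ha hP' hb.
have -> : [set (c, c)] = rcomp (rcomp (transp P) [set (a, a)]) P.
  apply/setP=> [[x y]]; rewrite !inE /=; apply/idP/idP.
    case/eqP=> -> ->; apply/existsP; exists a; rewrite hb eqxx andbT inE.
    by apply/existsP; exists a; rewrite !inE /= hb !eqxx.
  case/existsP=> z /andP[]; rewrite inE => /existsP[w /andP[]].
  rewrite !inE /= => xw /eqP[wa za]; rewrite za hb => /eqP ->.
  by move: xw; rewrite wa hb => /eqP ->.
by apply: rel_comp => //; apply: rel_comp => //; apply: rel_transp.
Qed.

Lemma discrete : (forall x, is_rel S [set (x, x)]) -> forall T, is_rel S T.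
Proof.
move=> h T; apply/relP=> s sS p q ps qs pT.
have : is_rel S (rcomp (rcomp [set (p.1, p.1)] [set: V * V]) [set (p.2, p.2)]).
  by apply: rel_comp => //; apply: rel_comp => //; apply: rel_setT.
move=> /relP /(_ s sS p q ps qs).
have mem : forall z, (z \in rcomp (rcomp [set (p.1, p.1)] [set: V * V]) [set (p.2, p.2)]) = (z == p).
  move=> [z1 z2]; rewrite !inE; apply/existsP/eqP.
    case=> y /andP[]; rewrite inE => /existsP[w /andP[h1 _ h3]].
    move: h1 h3; rewrite !inE /= => /eqP[e1 _] /eqP[_ e4].
    by rewrite e1 e4 -surjective_pairing.
  move=> ->; exists p.2; rewrite !inE !eqxx andbT; apply/existsP; exists p.1.
  by rewrite !inE !eqxx.
by rewrite !mem eqxx => /(_ isT) /eqP ->.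
Qed.

End Sch.
End Gen.
Section Gen2.
Variable V : finType.
Implicit Types (S : {set {set V * V}}) (T : {set V * V}).

Lemma basis_exists (P : {set V * V} -> Prop) :
  (forall B T, P B -> P T -> T \subset B -> P (B :\: T)) ->
  forall X p, P X -> p \in X -> exists2 B, Defs.basis_of P B & p \in B.
Proof.
move=> hD X; have [n] := ubnP #|X|; elim: n X => // n IH X ltX p PX pX.
case: (classic (exists T, [/\ P T, T \subset X, T != set0 & T != X])).
  case=> T [PT sTX nT0 nTX].
  case pT: (p \in T).
    apply: (IH T) => //; rewrite -ltnS; apply: (leq_trans _ ltX); rewrite ltnS.
    by apply: proper_card; rewrite properEneq nTX sTX.
  apply: (IH (X :\: T)); last by rewrite inE pT pX.
    2: exact: hD.
  rewrite -ltnS; apply: (leq_trans _ ltX); rewrite ltnS; apply: proper_card; apply/properP; split.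
    exact: subsetDl.
  case/set0Pn: nT0 => t tT; exists t; first exact: (subsetP sTX).
  by rewrite inE tT.
move=> H; exists X => //; split => //.
  by apply/set0Pn; exists p.
move=> T PT sTX; case: (eqVneq T set0) => [->|nT0]; first by left.
case: (eqVneq T X) => [->|nTX]; first by right.
by exfalso; apply: H; exists T.
Qed.

Section Pre.
Variable f : V -> V.
Hypothesis fK : involutive f.
Definition f2 (p : V * V) := (f p.1, f p.2).
Lemma f2K : involutive f2.
Proof. by move=> [a b]; rewrite /f2 /= !fK. Qed.
Lemma f2_inj : injective f2. Proof. exact: inv_inj f2K. Qed.
Lemma f_inj : injective f. Proof. exact: inv_inj fK. Qed.

Definition preS S : {set {set V * V}} := [set f2 @: (s : {set V * V}) | s in S].

Lemma mem_f2 T p : (p \in f2 @: T) = (f2 p \in T).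
Proof. by rewrite (can_imset_pre _ f2K) inE. Qed.

Lemma preS_closed1 S T : sclosed S (f2 @: T) -> sclosed (preS S) T.
Proof.
move=> c s' /imsetP[s sS ->] p q; rewrite !mem_f2 => ps qs pT.
have := c s sS _ _ ps qs; rewrite !mem_f2 !f2K; exact.
Qed.

Lemma preS_closed2 S T : sclosed (preS S) T -> sclosed S (f2 @: T).
Proof.
move=> c s sS p q ps qs; rewrite !mem_f2 => pT.
apply: (c (f2 @: s) _ (f2 p) (f2 q)); rewrite ?imset_f ?mem_f2 ?f2K //.
Qed.

Lemma preS_scheme S : is_scheme S -> is_scheme (preS S).
Proof.
case=> hP htr hd hI; split.
- have -> : [set: V * V] = f2 @: [set: V * V].
    by apply/setP=> p; rewrite mem_f2 !inE.
  by rewrite /preS imset_partition //; exact: f2_inj.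
- move=> s' /imsetP[s sS ->]; apply/imsetP; exists (transp s); first exact: htr.
  by apply/setP=> p; rewrite !(mem_f2, inE).
- have hP' : partition (preS S) [set: V * V].
    have -> : [set: V * V] = f2 @: [set: V * V].
      by apply/setP=> p; rewrite mem_f2 !inE.
    by rewrite /preS imset_partition //; exact: f2_inj.
  apply/(rel_closed _ hP'); apply: preS_closed1.
  have hPS : partition S [set: V * V] by [].
  apply/(rel_closed _ hPS).
  have -> : f2 @: diagV V = diagV V.
    by apply/setP=> p; rewrite mem_f2 !inE /= (inj_eq f_inj).
  exact: hd.
- move=> r1' r2' s' /imsetP[r1 r1S ->] /imsetP[r2 r2S ->] /imsetP[s sS ->] x z x' z'.
  rewrite !mem_f2 /f2 /= => h h'.
  have E : forall a b, #|[set y | ((a, y) \in f2 @: r1) && ((y, b) \in f2 @: r2)]| =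
                       #|[set y | ((f a, y) \in r1) && ((y, f b) \in r2)]|.
    move=> a b; rewrite -[RHS](card_preimset _ f_inj); apply: eq_card => y.
    by rewrite !inE !mem_f2.
  by rewrite !E (hI _ _ _ r1S r2S sS _ _ _ _ h h').
Qed.
End Pre.

Section Orb.
Variable H : {group {perm V}}.
Definition orbP (p : V * V) : {set V * V} := [set ((t : {perm V}) p.1, t p.2) | t in H].
Definition orbS : {set {set V * V}} := [set orbP p | p : V * V].

Lemma orbP_refl p : p \in orbP p.
Proof. by apply/imsetP; exists 1%g; rewrite ?group1 // !perm1 -surjective_pairing. Qed.

Lemma orbP_act p t : t \in H -> (t p.1, t p.2) \in orbP p.
Proof. by move=> tH; apply/imsetP; exists t. Qed.

Lemma orbP_inv s t a b : s \in orbS -> t \in H -> ((t a, t b) \in s) = ((a, b) \in s).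
Proof.
move=> /imsetP[p _ ->] tH; apply/imsetP/imsetP.
  case=> u uH [e1 e2]; exists (u * t^-1)%g; first by rewrite groupM ?groupV.
  by rewrite !permM -e1 -e2 !permK.
case=> u uH [e1 e2]; exists (u * t)%g; first by rewrite groupM.
by rewrite !permM -e1 -e2.
Qed.

Lemma orbP_mem p q : q \in orbP p -> exists2 t, t \in H & q = (t p.1, t p.2).
Proof. by case/imsetP=> t tH ->; exists t. Qed.

Lemma orbP_eq p q : q \in orbP p -> orbP q = orbP p.
Proof.
case/orbP_mem=> t tH ->; apply/setP=> r; apply/imsetP/imsetP.
  case=> u uH ->; exists (t * u)%g; rewrite ?groupM // !permM //.
case=> u uH ->; exists (t^-1 * u)%g; rewrite ?groupM ?groupV //= !permM !permK //.
Qed.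

Lemma orbS_scheme : is_scheme orbS.
Proof.
have hP : partition orbS [set: V * V].
  apply/and3P; split.
  - apply/eqP/setP=> p; rewrite inE; apply/bigcupP; exists (orbP p).
      exact: imset_f.
    exact: orbP_refl.
  - apply/trivIsetP=> A B /imsetP[p _ ->] /imsetP[q _ ->] neq.
    apply/pred0P=> r /=; apply/negP=> /andP[rp rq]; move/negP: neq; apply.
    by rewrite -(orbP_eq rp) -(orbP_eq rq).
  - by apply/imsetP=> [[p _ e]]; have := orbP_refl p; rewrite -e inE.
split => //.
- move=> s /imsetP[p _ ->]; apply/imsetP; exists (p.2, p.1) => //.
  apply/setP=> q; rewrite inE; apply/imsetP/imsetP.
    by case=> t tH [e1 e2]; exists t => //=; rewrite -e1 -e2 -surjective_pairing.
  by case=> t tH ->; exists t.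
- apply/(rel_closed _ hP)=> s sS p q ps qs; rewrite !inE.
  case/imsetP: sS ps qs => r _ -> /orbP_mem[t tH ->] /orbP_mem[u uH ->] /= /eqP e.
  by rewrite (perm_inj e).
- move=> r1 r2 s r1S r2S sS x z x' z' h h'.
  case/imsetP: sS h h' => r _ -> h h'.
  have := orbP_eq h; move=> e; rewrite -e in h'.
  case/orbP_mem: h' => t tH /= [-> ->].
  rewrite -[RHS](card_preimset _ (@perm_inj _ t)); apply: eq_card => y.
  by rewrite !inE !orbP_inv.
Qed.
End Orb.
End Gen2.
Local Open Scope ring_scope.
Definition asb (P : Prop) : bool := if excluded_middle_informative P then true else false.
Lemma asbP (P : Prop) : asb P <-> P.
Proof. by rewrite /asb; case: excluded_middle_informative. Qed.

Section Ring.
Variable R : finComUnitRingType.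
Variable K : {group {unit R}}.

Lemma unitsE (x : R) : (x \in unitsR R) = (x \is a GRing.unit).
Proof. by rewrite inE. Qed.

Lemma val_unit (k : {unit R}) : val k \is a GRing.unit.
Proof. exact: valP. Qed.

Lemma rK_mul1 (k : {unit R}) r z : k \in K -> z \in rK K r -> val k * z \in rK K r.
Proof.
move=> kK /imsetP[k' k'K ->]; apply/imsetP; exists (k * k')%g; first by rewrite groupM.
by rewrite FinRing.val_unitM mulrCA.
Qed.

Lemma rK_mul (k : {unit R}) r z : k \in K -> (val k * z \in rK K r) = (z \in rK K r).
Proof.
move=> kK; apply/idP/idP; last exact: rK_mul1.
move=> h; have := rK_mul1 (groupVr kK) h.
by rewrite FinRing.val_unitV mulKr ?val_unit.
Qed.

Lemma rK_opp r z : (z \in rK K (- r)) = (- z \in rK K r).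
Proof.
apply/imsetP/imsetP=> [[k kK ->]|[k kK e]]; exists k => //.
  by rewrite mulNr opprK.
by rewrite mulNr -e opprK.
Qed.

Lemma rK_self r : r \in rK K r.
Proof. by apply/imsetP; exists 1%g; rewrite ?group1 // FinRing.val_unit1 mulr1. Qed.

Lemma rK_unit r z : r \is a GRing.unit -> z \in rK K r -> z \is a GRing.unit.
Proof. by move=> ru /imsetP[k _ ->]; rewrite unitrM ru val_unit. Qed.

Lemma mem_cyc r (p : R * R) : (p \in cyc_rel K r) = (p.2 - p.1 \in rK K r).
Proof. by rewrite inE. Qed.

Lemma cyc_is_rel r : is_rel (Cyc_basis K) (cyc_rel K r).
Proof.
exists [set cyc_rel K r]; first by rewrite sub1set; apply: imset_f.
by rewrite /cover big_set1.
Qed.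

Lemma local_nonunit : local_ring R -> forall y : R, y \isn't a GRing.unit ->
  (1 - y) \is a GRing.unit.
Proof.
case=> I [[idI n1I maxI] uniqI].
have inI : forall z : R, z \isn't a GRing.unit -> z \in I.
  move=> z nz.
  set J0 : {set R} := [set r * z | r : R].
  have idJ0 : is_ideal J0.
    split.
    - by apply/imsetP; exists 0; rewrite ?mul0r.
    - move=> a b /imsetP[r _ ->] /imsetP[s _ ->]; apply/imsetP; exists (r + s) => //.
      by rewrite mulrDl.
    - move=> a /imsetP[r _ ->]; apply/imsetP; exists (- r) => //; by rewrite mulNr.
    - move=> t a /imsetP[r _ ->]; apply/imsetP; exists (t * r) => //; by rewrite mulrA.
  have n1J0 : (1 : R) \notin J0.
    apply/negP=> /imsetP[r _ e]; move/negP: nz; apply; apply/unitrPr.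
    by exists r; rewrite mulrC e.
  pose P (J : {set R}) := asb [/\ is_ideal J, (1 : R) \notin J & J0 \subset J].
  have PJ0 : P J0 by apply/asbP; split.
  have [J /asbP [idJ n1J sJ] mx] := @arg_maxnP _ J0 P (fun J : {set R} => #|J|) PJ0.
  have mJ : is_maximal_ideal J.
    split => // J' idJ' n1J' sJJ'.
    have : (#|J'| <= #|J|)%N by apply: mx; apply/asbP; split => //; apply: subset_trans sJJ'.
    move=> le; apply/eqP; rewrite eq_sym eqEcard sJJ' le //.
  rewrite -(uniqI J mJ); apply: (subsetP sJ); apply/imsetP; exists 1 => //.
  by rewrite mul1r.
move=> y ny; apply/negP=> n1y.
have := inI _ ny; have := inI _ (introN idP n1y).
case: idI => _ addI _ _ h1 h2; move/negP: n1I; apply.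
by have := addI _ _ h2 h1; rewrite addrC subrK.
Qed.

End Ring.
Section KL.
Variable R : finComUnitRingType.
Variable K : {group {unit R}}.
Notation U2 := (setX (unitsR R) (unitsR R)).

Definition Wc : {set R * R} := cover [set cyc_rel K r | r in unitsR R].

Lemma memW (c d : R) : ((c, d) \in Wc) = (d - c \in unitsR R).
Proof.
apply/bigcupP/idP.
  case=> t /imsetP[r ru ->]; rewrite mem_cyc /= => h.
  by rewrite unitsE (rK_unit _ h) // -unitsE.
move=> h; exists (cyc_rel K (d - c)); first exact: imset_f.
by rewrite mem_cyc rK_self.
Qed.

Lemma U2_rel (S : {set {set R * R}}) : is_scheme S ->
  (forall T', is_rel (Cyc_basis K) T' -> is_rel S T') ->
  is_rel S [set ((0 : R), (0 : R))] -> is_rel S U2.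
Proof.
move=> hS hc h0.
have hW : is_rel S Wc.
  apply: hc; exists [set cyc_rel K r | r in unitsR R] => //.
  by apply/subsetP=> t /imsetP[r _ ->]; apply: imset_f.
set W0 := rcomp [set ((0 : R), (0 : R))] Wc.
have mW0 : forall y a : R, ((y, a) \in W0) = (y == 0) && (a \in unitsR R).
  move=> y a; rewrite inE; apply/existsP/andP.
    case=> w /andP[]; rewrite inE /= => /eqP[-> ->]; rewrite memW subr0 => h.
    by split.
  case=> /eqP -> h; exists 0; rewrite !inE eqxx /= memW subr0; exact: h.
have -> : U2 = rcomp (transp W0) W0.
  apply/setP=> [[a b]]; rewrite !inE /=; apply/andP/existsP.
    by case=> ha hb; exists 0; rewrite inE /= !mW0 eqxx !unitsE ha hb.
  by case=> y; rewrite inE /= !mW0 !unitsE => /andP[/andP[_ ->] /andP[_ ->]].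
apply: rel_comp => //; first apply: rel_transp => //; apply: rel_comp => //.
Qed.

Lemma Cu_setD T1 T2 : Cu_rel K T1 -> Cu_rel K T2 -> Cu_rel K (T1 :\: T2).
Proof. by move=> h1 h2 S hS hc hm; apply: rel_setD => //; [apply: h1 | apply: h2]. Qed.
Lemma Cu_setI T1 T2 : Cu_rel K T1 -> Cu_rel K T2 -> Cu_rel K (T1 :&: T2).
Proof. by move=> h1 h2 S hS hc hm; apply: rel_setI => //; [apply: h1 | apply: h2]. Qed.
Lemma Cu_setT : Cu_rel K [set: R * R].
Proof. by move=> S hS _ _; apply: rel_setT. Qed.
Lemma Cu_U2 : Cu_rel K U2.
Proof.
move=> S hS hc hm; apply: U2_rel => //; apply: hm; exact: set11.
Qed.

Lemma CuU_sub B : CuU_basis K B -> B \subset U2.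
Proof. by case=> S1 _ [-> _]; apply: subsetIr. Qed.

Lemma CuU_disj B1 B2 p : CuU_basis K B1 -> CuU_basis K B2 -> p \in B1 -> p \in B2 -> B1 = B2.
Proof.
case=> S1 [c1 n1 m1] [-> _]; case=> S2 [c2 n2 m2] [-> _].
rewrite !inE => /andP[p1 pU] /andP[p2 _].
have c12 := Cu_setI c1 c2.
have ne : S1 :&: S2 != set0 by apply/set0Pn; exists p; rewrite inE p1 p2.
have e1 : S1 :&: S2 = S1.
  by case: (m1 _ c12 (subsetIl _ _)) => // e; rewrite e eqxx in ne.
have e2 : S1 :&: S2 = S2.
  by case: (m2 _ c12 (subsetIr _ _)) => // e; rewrite e eqxx in ne.
by rewrite -e1 {1}e2.
Qed.

Lemma imE (a : R) (X : {set R * R}) : a \is a GRing.unit ->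
  [set (p.1 * a, p.2 * a) | p in X] = [set p | (p.1 * a^-1, p.2 * a^-1) \in X].
Proof.
move=> au; apply/setP=> p; rewrite (@can_imset_pre _ _ (fun p : R * R => (p.1 * a^-1, p.2 * a^-1))).
  by rewrite !inE.
by move=> [c d] /=; rewrite !mulrK.
Qed.

Lemma Cp_U2 : Cprime_rel K U2.
Proof.
split.
  exists [set B | asb (CuU_basis K B)].
    move=> B; rewrite inE => /asbP; done.
  apply/setP=> p; apply/idP/idP.
    move=> pU.
    have [S1 b1 pS1] := @basis_exists _ (Cu_rel K) (fun B T hB hT _ => Cu_setD hB hT) [set: R * R] p Cu_setT (in_setT p).
    apply/bigcupP; exists (S1 :&: U2); last by rewrite inE pS1.
    rewrite inE; apply/asbP; exists S1 => //; split => //.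
    by apply/set0Pn; exists p; rewrite inE pS1.
  case/bigcupP=> B; rewrite inE => /asbP /CuU_sub /subsetP; apply.
move=> a; rewrite unitsE => au; rewrite imE //.
apply/setP=> [[c d]]; rewrite !inE /=.
by rewrite !unitrMl ?unitrV.
Qed.

Lemma Cp_D B T : Cprime_rel K B -> Cprime_rel K T -> T \subset B -> Cprime_rel K (B :\: T).
Proof.
case=> [[QB hQB eB] iB] [[QT hQT eT] iT] sTB; split.
  exists (QB :\: QT).
    by move=> b; rewrite inE => /andP[_]; apply: hQB.
  apply/setP=> p; rewrite inE eB eT; apply/andP/bigcupP.
    case=> /bigcupP nT /bigcupP[b bQ pb]; exists b => //; rewrite inE bQ andbT.
    by apply/negP=> bT; apply: nT; exists b.
  case=> b; rewrite inE => /andP[nb bQ] pb; split; last by apply/bigcupP; exists b.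
  apply/negP=> /bigcupP[t tQ pt].
  have e := CuU_disj (hQB _ bQ) (hQT _ tQ) pb pt.
  by rewrite e tQ in nb.
move=> a au; have au' : a \is a GRing.unit by rewrite -unitsE.
have := iB a au; have := iT a au; rewrite !imE //.
move=> eT' eB'.
have hB q : ((q.1 / a, q.2 / a) \in B) = (q \in B) by rewrite -[in RHS]eB' inE.
have hT q : ((q.1 / a, q.2 / a) \in T) = (q \in T) by rewrite -[in RHS]eT' inE.
by apply/setP=> p; rewrite !inE /= hB hT.
Qed.

Section InS.
Variable S : {set {set R * R}}.
Hypothesis hS : is_scheme S.
Hypothesis hc : forall T', is_rel (Cyc_basis K) T' -> is_rel S T'.
Hypothesis h0 : is_rel S [set ((0 : R), (0 : R))].

Lemma Cu_S T : Cu_rel K T -> is_rel S T.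
Proof. by move=> h; apply: h => // T'; rewrite inE => /eqP ->. Qed.

Lemma Cp_S B : Cprime_rel K B -> is_rel S B.
Proof.
case=> [[Q hQ ->] _]; apply: rel_cover => // b bQ.
case: (hQ b bQ) => S1 [c1 _ _] [-> _].
apply: rel_setI => //; first exact: Cu_S.
exact: U2_rel.
Qed.

Lemma G_rel : mult_sring_trivial K -> forall x : R, x \in unitsR R ->
  is_rel S [set (g, x * g) | g in unitsR R].
Proof.
move=> tr x xu.
have pU : ((1 : R), x) \in U2 by rewrite inE /= unitsE unitr1 xu.
have [B Bb pB] := basis_exists (@Cp_D) Cp_U2 pU.
have [x' _ e] := tr B Bb.
move: pB; rewrite e => /imsetP[g _ [g1 xe]].
have ex : x = x' by rewrite xe -g1 mulr1.
rewrite ex -e; apply: Cp_S; by case: Bb.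
Qed.
End InS.
End KL.
Section Main.
Variable R : finComUnitRingType.
Variable K : {group {unit R}}.

Lemma memG1 (x b : R) : (((1 : R), b) \in [set (g, x * g) | g in unitsR R]) = (b == x).
Proof.
apply/imsetP/eqP=> [[g _ [g1 ->]]|->]; first by rewrite -g1 mulr1.
by exists 1; rewrite ?mulr1 // unitsE unitr1.
Qed.

Definition sig1 (z : R) := 1 - z.
Lemma sig1K : involutive sig1. Proof. exact: subKr. Qed.

Lemma cyc_sig T' : is_rel (Cyc_basis K) T' -> is_rel (Cyc_basis K) (f2 sig1 @: T').
Proof.
case=> Q QC ->; exists [set f2 sig1 @: (c : {set R * R}) | c in Q]; last by rewrite imset_cover cover_imset.
apply/subsetP=> c' /imsetP[c cQ ->]; have := subsetP QC _ cQ.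
case/imsetP=> r _ ->; apply/imsetP; exists (- r) => //.
apply/setP=> p; rewrite (mem_f2 sig1K) !mem_cyc /f2 /sig1 /= rK_opp.
by have -> : 1 - p.2 - (1 - p.1) = - (p.2 - p.1) by ring.
Qed.

Lemma part1 : local_ring R -> mult_sring_trivial K ->
  gen_trivial (Cyc_basis K) [set [set ((0 : R), (0 : R))]; [set ((1 : R), (1 : R))]].
Proof.
move=> loc tr T S hS hc hm.
have h0 : is_rel S [set ((0 : R), (0 : R))] by apply: hm; rewrite !inE eqxx.
have h1 : is_rel S [set ((1 : R), (1 : R))] by apply: hm; rewrite !inE eqxx orbT.
apply: (discrete hS) => y.
case yu: (y \is a GRing.unit).
  apply: (rel_single hS h1 (G_rel hS hc h0 tr (x := y) _)); first by rewrite unitsE.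
  by move=> b; rewrite memG1.
have xu : (1 - y) \is a GRing.unit by apply: local_nonunit => //; rewrite yu.
set S' := preS sig1 S.
have hS' : is_scheme S' by apply: preS_scheme => //; exact: sig1K.
have hP : partition S [set: R * R] by case: hS.
have hP' : partition S' [set: R * R] by case: hS'.
have tr1 : forall T' : {set R * R}, is_rel S (f2 sig1 @: T') -> is_rel S' T'.
  move=> T' /(rel_closed _ hP) h; apply/(rel_closed _ hP'); apply: preS_closed1 => //.
  exact: sig1K.
have hc' : forall T', is_rel (Cyc_basis K) T' -> is_rel S' T'.
  by move=> T' h; apply: tr1; apply: hc; apply: cyc_sig.
have h0' : is_rel S' [set ((0 : R), (0 : R))].
  apply: tr1; have -> : f2 sig1 @: [set ((0 : R), (0 : R))] = [set ((1 : R), (1 : R))] => //.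
  apply/setP=> [[c d]]; rewrite (mem_f2 sig1K) !inE /f2 /sig1 /=.
  by rewrite !xpair_eqE !subr_eq0 ![1 == _]eq_sym.
have hG := G_rel hS' hc' h0' tr (x := 1 - y).
have hG' : is_rel S (f2 sig1 @: [set (g, (1 - y) * g) | g in unitsR R]).
  apply/(rel_closed _ hP); apply: preS_closed2; first exact: sig1K.
  by apply/(rel_closed _ hP'); apply: hG; rewrite unitsE.
apply: (rel_single hS h0 hG') => b.
rewrite (mem_f2 sig1K) /f2 /sig1 /= subr0 memG1.
by apply/eqP/eqP=> [h|->]; [rewrite -(subKr 1 b) h subKr | ].
Qed.

End Main.
Section Main2.
Variable R : finComUnitRingType.
Variable K : {group {unit R}}.

Lemma in_cyc_basis r : cyc_rel K r \in Cyc_basis K.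
Proof. by apply/imsetP; exists r. Qed.

Lemma gamma_aut (g : {perm R}) : in_Gamma K g -> in_Aut (Cyc_basis K) g.
Proof.
case=> a aK [b hg] B /imsetP[r _ ->].
have au := val_unit a.
apply/setP=> q; apply/imsetP/idP.
  case=> p pB ->; rewrite mem_cyc /= !hg.
  have -> : val a * p.2 + b - (val a * p.1 + b) = val a * (p.2 - p.1) by ring.
  by rewrite rK_mul // -mem_cyc.
move=> qB; exists ((val a)^-1 * (q.1 - b), (val a)^-1 * (q.2 - b)).
  rewrite mem_cyc /=.
  have -> : (val a)^-1 * (q.2 - b) - (val a)^-1 * (q.1 - b) =
            val (a^-1)%g * (q.2 - q.1) by rewrite FinRing.val_unitV; ring.
  by rewrite rK_mul ?groupV // -mem_cyc.
by rewrite /= !hg !mulVKr // !subrK -surjective_pairing.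
Qed.

Lemma aut_gamma (g : {perm R}) : local_ring R -> mult_sring_trivial K ->
  in_Aut (Cyc_basis K) g -> in_Gamma K g.
Proof.
move=> loc tr hg.
have key : forall r (p : R * R), ((g p.1, g p.2) \in cyc_rel K r) = (p \in cyc_rel K r).
  move=> r p; have hB := hg _ (in_cyc_basis r); apply/idP/idP.
    rewrite -{1}hB => /imsetP[p' p'B [e1 e2]].
    by rewrite (surjective_pairing p) (perm_inj e1) (perm_inj e2) -surjective_pairing.
  by move=> pB; rewrite -hB; apply: imset_f.
have : ((g 0), (g 1)) \in cyc_rel K 1 by rewrite (key 1 (0, 1)) mem_cyc /= subr0 rK_self.
rewrite mem_cyc /= => /imsetP[a aK ea]; rewrite mul1r in ea.
have au := val_unit a.
exists a => //; exists (g 0).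
pose f (z : R) := (val a)^-1 * (g z - g 0).
have finj : injective f.
  have aiu : (val a)^-1 \is a GRing.unit by rewrite unitrV.
  move=> z1 z2; rewrite /f => /(mulrI aiu) /addIr; exact: perm_inj.
pose h := perm finj.
have hE z : h z = f z by rewrite permE.
have h0 : h 0 = 0 by rewrite hE /f subrr mulr0.
have h1 : h 1 = 1 by rewrite hE /f ea mulVr.
have hcyc : forall r (p : R * R), ((h p.1, h p.2) \in cyc_rel K r) = (p \in cyc_rel K r).
  move=> r p; rewrite -key !mem_cyc /= !hE /f.
  have -> : (val a)^-1 * (g p.2 - g 0) - (val a)^-1 * (g p.1 - g 0) =
            val (a^-1)%g * (g p.2 - g p.1) by rewrite FinRing.val_unitV; ring.
  by rewrite rK_mul ?groupV.
set H := <[h]>%G.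
have Hprop : forall t, t \in H -> [/\ t 0 = 0, t 1 = 1 &
    forall r (p : R * R), ((t p.1, t p.2) \in cyc_rel K r) = (p \in cyc_rel K r)].
  move=> t /cycleP[n ->]; elim: n => [|n [e0 e1 ec]].
    by rewrite expg0 !perm1; split => // r p; rewrite !perm1 -surjective_pairing.
  rewrite expgSr !permM e0 e1 h0 h1; split => // r p.
  by rewrite !permM; have := hcyc r ((h ^+ n)%g p.1, (h ^+ n)%g p.2); rewrite /= => ->.
have hS := orbS_scheme H.
have hP : partition (orbS H) [set: R * R] by case: hS.
have hc : forall T', is_rel (Cyc_basis K) T' -> is_rel (orbS H) T'.
  move=> T' [Q QC ->]; apply/(rel_closed _ hP)=> s sS p q ps qs /bigcupP[c cQ pc].
  apply/bigcupP; exists c => //.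
  case/imsetP: sS ps qs => u _ -> ps qs.
  rewrite -(orbP_eq ps) in qs; case/orbP_mem: qs => t tH ->.
  have := subsetP QC _ cQ; case/imsetP=> r _ ec; rewrite ec in pc *.
  by case: (Hprop t tH) => _ _ ->.
have hm : forall T', T' \in [set [set ((0 : R), (0 : R))]; [set ((1 : R), (1 : R))]] ->
    is_rel (orbS H) T'.
  move=> T' hT; apply/(rel_closed _ hP)=> s sS p q ps qs.
  case/imsetP: sS ps qs => u _ -> ps qs.
  rewrite -(orbP_eq ps) in qs; case/orbP_mem: qs => t tH ->.
  case: (Hprop t tH) => e0 e1 _.
  by move: hT; rewrite !inE => /orP[] /eqP -> /[!inE] /eqP -> /=; rewrite ?e0 ?e1.
move=> z.
have := part1 loc tr [set (z, z)] hS hc hm.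
move=> /(rel_closed _ hP) cl.
have hz := cl (orbP H (z, z)) (ltac:(by apply/imsetP; exists (z, z))) (z, z) (h z, h z) (orbP_refl H (z, z)).
have : (h z, h z) \in [set (z, z)].
  apply: hz; last by rewrite inE.
  exact: (orbP_act (z, z) (cycle_id h)).
move/set1P=> [e _]; rewrite hE /f in e.
by rewrite -{2}e mulVKr // subrK.
Qed.

End Main2.
Unset Implicit Arguments.
Theorem theorem4p4 (R : finComUnitRingType) (K : {group {unit R}}) :
  local_ring R ->
  mult_sring_trivial K ->
  gen_trivial (Cyc_basis K) [set [set ((0 : R), (0 : R))]; [set ((1 : R), (1 : R))]] /\
  (forall g : {perm R}, in_Aut (Cyc_basis K) g <-> in_Gamma K g).
Proof.
move=> loc tr; split; first exact: part1.
move=> g; split; [exact: aut_gamma | exact: gamma_aut].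
Qed.
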